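(* Let $\mathbf{x}_1,\dots,\mathbf{x}_n\in\mathbb{R}^d$ and define $L(\{\boldsymbol\mu_j\}_{j=1}^K,\{y_i\}_{i=1}^n)=\sum_{i=1}^n\|\mathbf{x}_i-\boldsymbol\mu_{y_i}\|_2^2$ for $\boldsymbol\mu_j\in\mathbb{R}^d$, $y_i\in[K]$. Let $\{\boldsymbol\mu_j^\star\},\{\hat{\boldsymbol\mu}_j\}\subseteq\mathbb{R}^d$, $\{y_i^\star\},\{\hat y_i\}\subseteq[K]$, $s=\min_{j\ne k}\|\boldsymbol\mu_j^\star-\boldsymbol\mu_k^\star\|_2$ and $n_{\min}=\min_{j\in[K]}|\{i:y_i^\star=j\}|$. Suppose that for some $C>0$ and $\delta\in(0,s/2)$: (1) $L(\{\hat{\boldsymbol\mu}_j\},\{\hat y_i\})\le C\cdot L(\{\boldsymbol\mu_j^\star\},\{y_i^\star\})$ and $\hat y_i\in\mathrm{argmin}_{j\in[K]}\|\mathbf{x}_i-\hat{\boldsymbol\mu}_j\|_2$ for all $i$; (2) $L(\{\boldsymbol\mu_j^\star\},\{y_i^\star\})\le\delta^2n_{\min}/[(1+\sqrt C)^2K]$. Then there exists a permutation $\tau$ of $[K]$ such that $\sum_{j=1}^K\|\boldsymbol\mu_j^\star-\hat{\boldsymbol\mu}_{\tau(j)}\|_2^2\le\frac{(1+\sqrt C)^2K}{n_{\min}}L(\{\boldsymbol\mu_j^\star\},\{y_i^\star\})$, $\{i:\hat y_i\ne\tau(y_i^\star)\}\subseteq\{i:\|\mathbf{x}_i-\boldsymbol\mu^\star_{y_i^\star}\|_2\ge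 s/2-\delta\}$, and $|\{i:\hat y_i\ne\tau(y_i^\star)\}|\le|\{i:\|\mathbf{x}_i-\boldsymbol\mu^\star_{y_i^\star}\|_2\ge s/2-\delta\}|\le\frac{L(\{\boldsymbol\mu_j^\star\},\{y_i^\star\})}{(s/2-\delta)^2}$. *)

(* Defs.v *)
From HB Require Import structures.
From mathcomp Require Import all_boot all_order all_algebra all_fingroup.
Set Implicit Arguments. Unset Strict Implicit. Unset Printing Implicit Defensive.
Import Order.TTheory GRing.Theory Num.Theory.
Local Open Scope ring_scope.

Definition sqnorm (R : rcfType) (d : nat) (v : 'rV[R]_d) : R :=
  \sum_(k < d) (v ord0 k) ^+ 2.
Definition norm2 (R : rcfType) (d : nat) (v : 'rV[R]_d) : R :=
  Num.sqrt (sqnorm v).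

Definition kmloss (R : rcfType) (d n K : nat) (x : 'I_n -> 'rV[R]_d)
  (mu : 'I_K -> 'rV[R]_d) (y : 'I_n -> 'I_K) : R :=
  \sum_(i < n) sqnorm (x i - mu (y i)).

(* s = min_{j <> k} ||mu_j - mu_k||  (meaningful when K >= 2) *)
Definition min_sep (R : rcfType) (d K : nat) (mu : 'I_K -> 'rV[R]_d) : R :=
  let ds := [seq norm2 (mu p.1 - mu p.2) | p <- enum [pred p : 'I_K * 'I_K | p.1 != p.2]] in
  \big[Num.min/head 0 ds]_(r <- ds) r.

(* n_min = min_j |{i : y_i = j}| (every count is <= n, so n is a neutral start) *)
Definition min_size (n K : nat) (y : 'I_n -> 'I_K) : nat :=
  \big[minn/n]_(j < K) #|[set i | y i == j]|.

(* Main.v *)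
Require Import Defs.
From mathcomp Require Import all_boot all_order all_algebra all_fingroup.
From mathcomp Require Import ring lra.
Import Order.TTheory GRing.Theory Num.Theory.
Set Implicit Arguments. Unset Strict Implicit.
Local Open Scope ring_scope.

Lemma sqnorm_ge0 (R : rcfType) d (v : 'rV[R]_d) : 0 <= sqnorm v.
Proof. by apply: sumr_ge0 => k _; exact: sqr_ge0. Qed.

Lemma norm2_ge0 (R : rcfType) d (v : 'rV[R]_d) : 0 <= norm2 v.
Proof. exact: sqrtr_ge0. Qed.

Lemma norm2_sqr (R : rcfType) d (v : 'rV[R]_d) : norm2 v ^+ 2 = sqnorm v.
Proof. by rewrite /norm2 sqr_sqrtr // sqnorm_ge0. Qed.

Lemma sqnorm_eq0 (R : rcfType) d (v : 'rV[R]_d) : sqnorm v = 0 -> forall k, v ord0 k = 0.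
Proof.
move=> h k.
have := @psumr_eq0P _ _ xpredT (fun k => v ord0 k ^+ 2) (fun k _ => sqr_ge0 _) h k isT.
by move/eqP; rewrite sqrf_eq0 => /eqP.
Qed.

Definition dotp (R : rcfType) d (u v : 'rV[R]_d) := \sum_(k < d) u ord0 k * v ord0 k.

Lemma cs (R : rcfType) d (u v : 'rV[R]_d) : dotp u v <= norm2 u * norm2 v.
Proof.
set A := norm2 u; set B := norm2 v.
have hA : 0 <= A := norm2_ge0 u. have hB : 0 <= B := norm2_ge0 v.
have key : 0 <= \sum_(k < d) (B * u ord0 k - A * v ord0 k) ^+ 2.
  by apply: sumr_ge0 => k _; exact: sqr_ge0.
rewrite (eq_bigr (fun k => B^+2 * u ord0 k ^+2 - 2*(A*B) * (u ord0 k * v ord0 k)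
   + A^+2 * v ord0 k ^+2)) in key; last by move=> k _; ring.
rewrite big_split /= sumrB -!mulr_sumr in key.
rewrite -/(sqnorm u) -/(sqnorm v) -/(dotp u v) -(norm2_sqr u) -(norm2_sqr v) -/A -/B in key.
have [AB0|ABp] := eqVneq (A * B) 0.
  move: AB0 => /eqP; rewrite mulf_eq0 => /orP[] /eqP h0.
    have su : sqnorm u = 0 by rewrite -norm2_sqr -/A h0 expr0n.
    rewrite /dotp big1 ?h0 ?mul0r // => k _; by rewrite sqnorm_eq0 // mul0r.
  have sv : sqnorm v = 0 by rewrite -norm2_sqr -/B h0 expr0n.
  rewrite /dotp big1 ?h0 ?mulr0 // => k _; by rewrite (sqnorm_eq0 sv) mulr0.
have ABgt : 0 < A * B by rewrite lt_def ABp mulr_ge0.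
nra.
Qed.

Lemma norm2D (R : rcfType) d (u v : 'rV[R]_d) : norm2 (u + v) <= norm2 u + norm2 v.
Proof.
have h : sqnorm (u+v) = sqnorm u + 2 * dotp u v + sqnorm v.
  rewrite /sqnorm /dotp (eq_bigr (fun k => u ord0 k ^+2 + 2 * (u ord0 k * v ord0 k) + v ord0 k ^+ 2)); last by move=> k _; rewrite mxE; ring.
  by rewrite !big_split /= -mulr_sumr.
have hu := norm2_ge0 u; have hv := norm2_ge0 v.
have : sqnorm (u+v) <= (norm2 u + norm2 v)^+2.
  by rewrite h -(norm2_sqr u) -(norm2_sqr v); have := cs u v; nra.
move/ler_wsqrtr; rewrite sqrtr_sqr ger0_norm //; exact: addr_ge0.
Qed.

Lemma norm2_tri (R : rcfType) d (a b c : 'rV[R]_d) : norm2 (a - c) <= norm2 (a - b) + norm2 (b - c).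
Proof. have -> : a - c = (a - b) + (b - c) by rewrite addrA subrK. exact: norm2D. Qed.

Lemma norm2_sym (R : rcfType) d (a b : 'rV[R]_d) : norm2 (a - b) = norm2 (b - a).
Proof. rewrite /norm2 /sqnorm; congr Num.sqrt; apply: eq_bigr => k _; rewrite !mxE; ring. Qed.

Lemma bigmin_seq_le (R : rcfType) (s : seq R) x0 x : x \in s -> \big[Num.min/x0]_(r <- s) r <= x.
Proof.
elim: s => //= a s IH; rewrite inE big_cons => /orP[/eqP->|h]; first by rewrite ge_min lexx.
by rewrite ge_min IH ?orbT.
Qed.

Lemma min_sep_le (R : rcfType) d K (mu : 'I_K -> 'rV[R]_d) j k : j != k -> min_sep mu <= norm2 (mu j - mu k).
Proof.
move=> hjk; rewrite /min_sep; apply: bigmin_seq_le.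
by apply/mapP; exists (j, k) => //; rewrite mem_enum.
Qed.

Lemma bigminn_seq_le (I : eqType) (s : seq I) (F : I -> nat) n j : j \in s -> (\big[minn/n]_(i <- s) F i <= F j)%N.
Proof.
elim: s => //= a s IH; rewrite inE big_cons => /orP[/eqP->|h]; first exact: geq_minl.
exact: leq_trans (geq_minr _ _) (IH h).
Qed.

Lemma min_size_le n K (y : 'I_n -> 'I_K) j : (min_size y <= #|[set i | y i == j]|)%N.
Proof. by apply: bigminn_seq_le; rewrite mem_index_enum. Qed.

Lemma young (R : rcfType) (t p q m : R) : 0 < t -> 0 <= p -> 0 <= q -> 0 <= m -> m <= p + q ->
  m ^+ 2 <= (1 + t) * p ^+ 2 + (1 + t^-1) * q ^+ 2.
Proof.
move=> ht hp hq hm hmpq.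
have e : t^-1 * (t * p - q) ^+ 2 = t * p ^+ 2 - 2 * p * q + t^-1 * q ^+ 2.
  by field; exact: lt0r_neq0.
have : 0 <= t^-1 * (t * p - q) ^+ 2 by apply: mulr_ge0; [rewrite invr_ge0 ltW | exact: sqr_ge0].
rewrite e => h.
have h2 : m ^+ 2 <= (p + q) ^+ 2 by nra.
set u := t^-1 * q ^+ 2 in h *.
have -> : (1 + t^-1) * q ^+ 2 = q ^+ 2 + u by rewrite /u; ring.
lra.
Qed.

Lemma tsq_id (R : rcfType) (t : R) : 0 < t -> t ^+ 2 + t = (1 + t^-1) * t ^+ 2.
Proof. by move=> ht; field; exact: lt0r_neq0. Qed.

Theorem lemmaD1 (R : rcfType) (d n K : nat) (x : 'I_n -> 'rV[R]_d)
  (mustar muhat : 'I_K -> 'rV[R]_d) (ystar yhat : 'I_n -> 'I_K)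
  (C delta : R) :
  (2 <= K)%N ->
  (0 < min_size ystar)%N ->
  0 < C ->
  0 < delta -> delta < min_sep mustar / 2 ->
  kmloss x muhat yhat <= C * kmloss x mustar ystar ->
  (forall i j, norm2 (x i - muhat (yhat i)) <= norm2 (x i - muhat j)) ->
  kmloss x mustar ystar <=
    delta ^+ 2 * (min_size ystar)%:R / ((1 + Num.sqrt C) ^+ 2 * K%:R) ->
  exists tau : {perm 'I_K},
    [/\ \sum_(j < K) sqnorm (mustar j - muhat (tau j)) <=
          (1 + Num.sqrt C) ^+ 2 * K%:R / (min_size ystar)%:R * kmloss x mustar ystar,
        [set i | yhat i != tau (ystar i)] \subset
          [set i | min_sep mustar / 2 - delta <= norm2 (x i - mustar (ystar i))],
        leq #|[set i | yhat i != tau (ystar i)]|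
          #|[set i | min_sep mustar / 2 - delta <= norm2 (x i - mustar (ystar i))]|
      & (#|[set i | min_sep mustar / 2 - delta <= norm2 (x i - mustar (ystar i))]|)%:R
          <= kmloss x mustar ystar / (min_sep mustar / 2 - delta) ^+ 2].
Proof.
move=> hK hnm hC hd hds hL hargmin hLs.
set t := Num.sqrt C.
have ht : 0 < t by rewrite sqrtr_gt0.
have tC : t ^+ 2 = C by rewrite sqr_sqrtr // ltW.
set s := min_sep mustar. set nm := min_size ystar.
rewrite -/s in hds.
set Ls := kmloss x mustar ystar. set Lh := kmloss x muhat yhat.
set a := fun i => norm2 (x i - mustar (ystar i)).
set b := fun i => norm2 (x i - muhat (yhat i)).
have eLs : Ls = \sum_i a i ^+ 2 by apply: eq_bigr => i _; rewrite /a norm2_sqr.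
have eLh : Lh = \sum_i b i ^+ 2 by apply: eq_bigr => i _; rewrite /b norm2_sqr.
have ha : forall i, 0 <= a i by move=> i; exact: norm2_ge0.
have hb : forall i, 0 <= b i by move=> i; exact: norm2_ge0.
have hLs0 : 0 <= Ls by rewrite eLs; apply: sumr_ge0 => i _; exact: sqr_ge0.
have [f hf] : exists f : 'I_K -> 'I_K, forall j k,
    norm2 (mustar j - muhat (f j)) <= norm2 (mustar j - muhat k).
  exists (fun j => [arg min_(k < j) norm2 (mustar j - muhat k)]%O) => j k.
  case: (@arg_minP _ _ _ j xpredT (fun k => norm2 (mustar j - muhat k)) isT) => k' _ hk.
  exact: hk.
set m := fun j => norm2 (mustar j - muhat (f j)).
have hm : forall j, 0 <= m j by move=> j; exact: norm2_ge0.
have h1 : forall i, m (ystar i) <= a i + b i.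
  move=> i; apply: le_trans (hf _ (yhat i)) _.
  apply: le_trans (norm2_tri _ (x i) _) _.
  by rewrite (norm2_sym (mustar _)).
have h2 : forall i, m (ystar i) ^+ 2 <= (1 + t) * a i ^+ 2 + (1 + t^-1) * b i ^+ 2.
  by move=> i; apply: young => //; apply: h1.
have h3 : \sum_i m (ystar i) ^+ 2 <= (1 + t) ^+ 2 * Ls.
  apply: le_trans (ler_sum _ (fun i _ => h2 i)) _.
  rewrite big_split /= -!mulr_sumr -eLs -eLh.
  have : (1 + t^-1) * Lh <= (t ^+ 2 + t) * Ls.
    rewrite tsq_id //.
    rewrite -mulrA; apply: ler_wpM2l; first by rewrite addr_ge0 ?invr_ge0 ?ltW.
    by rewrite tC.
  nra.
have h4 : \sum_i m (ystar i) ^+ 2 = \sum_j #|[set i | ystar i == j]|%:R * m j ^+ 2.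
  rewrite (partition_big ystar xpredT) //=; apply: eq_bigr => j _.
  rewrite (eq_bigr (fun _ => m j ^+ 2)); last by move=> i /eqP ->.
  rewrite sumr_const mulr_natl; congr (_ *+ _).
  by apply: eq_card => i; rewrite !inE.
have h5 : nm%:R * \sum_j m j ^+ 2 <= (1 + t) ^+ 2 * Ls.
  apply: le_trans h3; rewrite h4 mulr_sumr; apply: ler_sum => j _.
  by apply: ler_wpM2r; [exact: sqr_ge0 | rewrite ler_nat; apply: min_size_le].
have nmp : 0 < nm%:R :> R by rewrite ltr0n.
have K1 : 1 <= K%:R :> R by rewrite ler1n; apply: leq_trans hK.
have hLs' : Ls * ((1 + t) ^+ 2 * K%:R) <= delta ^+ 2 * nm%:R.
  rewrite -ler_pdivlMr //; apply: mulr_gt0; last exact: (lt_le_trans ltr01 K1).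
  by apply: exprn_gt0; apply: addr_gt0.
have hsum : \sum_j m j ^+ 2 <= delta ^+ 2.
  have : nm%:R * \sum_j m j ^+ 2 <= nm%:R * delta ^+ 2.
    apply: le_trans h5 _.
    have : 0 <= (1 + t) ^+ 2 * Ls by apply: mulr_ge0 => //; exact: sqr_ge0.
    nra.
  by rewrite ler_pM2l.
have hmd : forall j, m j <= delta.
  move=> j; have : m j ^+ 2 <= delta ^+ 2.
    apply: le_trans hsum; rewrite (bigD1 j) //=.
    have : 0 <= \sum_(k < K | k != j) m k ^+ 2 by apply: sumr_ge0 => k _; exact: sqr_ge0.
    lra.
  have := hm j; nra.
have f_inj : injective f.
  move=> j j' e; apply/eqP; apply/negPn/negP => ne.
  have hs : s <= norm2 (mustar j - mustar j') by exact: min_sep_le.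
  have e2 : norm2 (muhat (f j) - mustar j') = m j' by rewrite /m -e norm2_sym.
  have tr : norm2 (mustar j - mustar j') <= m j + m j' by rewrite -e2; exact: norm2_tri.
  have := hmd j; have := hmd j'; lra.
exists (perm f_inj).
have hsub : [set i | yhat i != perm f_inj (ystar i)] \subset
          [set i | s / 2 - delta <= norm2 (x i - mustar (ystar i))].
  apply/subsetP => i; rewrite !inE => hne.
  rewrite leNgt; apply/negP => hlt.
  set j := ystar i.
  set j' := ((perm f_inj)^-1)%g (yhat i).
  have fj' : f j' = yhat i by rewrite -permE permKV.
  have [ej|nej] := eqVneq j' j.
    by move: hne; rewrite permE -fj' ej eqxx.
  rewrite eq_sym in nej.
  have hs := min_sep_le mustar nej; rewrite -/s in hs.
  have d1 := norm2_tri (x i) (mustar j) (muhat (f j)).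
  have d2 := norm2_tri (mustar j) (x i) (mustar j').
  have d3 := norm2_tri (x i) (muhat (f j')) (mustar j').
  have am := hargmin i (f j).
  rewrite (norm2_sym (mustar j) (x i)) in d2.
  rewrite (norm2_sym (muhat _)) fj' in d3.
  have := hmd j; have := hmd j'; rewrite /m fj'.
  rewrite -/(a i) in hlt d1 d2. rewrite -/(b i) in am d3.
  lra.
split => //.
- rewrite (eq_bigr (fun j => m j ^+ 2)); last by move=> j _; rewrite permE /m norm2_sqr.
  rewrite mulrAC ler_pdivlMr //.
  have hA : 0 <= (1 + t) ^+ 2 * Ls by apply: mulr_ge0 => //; exact: sqr_ge0.
  have hK' : (1 + t) ^+ 2 * Ls <= (1 + t) ^+ 2 * K%:R * Ls.
    have hh : (1 + t) ^+ 2 * Ls * 1 <= (1 + t) ^+ 2 * Ls * K%:R by apply: ler_wpM2l.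
    by rewrite mulr1 in hh; rewrite [X in _ <= X]mulrAC.
  rewrite mulrC; exact: le_trans h5 hK'.
- exact: subset_leq_card hsub.
- set S := [set i | s / 2 - delta <= norm2 (x i - mustar (ystar i))].
  have ep : 0 < s / 2 - delta by rewrite subr_gt0.
  rewrite ler_pdivlMr; last exact: exprn_gt0.
  have -> : #|S|%:R * (s / 2 - delta) ^+ 2 =
      \sum_i (if i \in S then (s / 2 - delta) ^+ 2 else 0).
    by rewrite -big_mkcond sumr_const mulr_natl.
  rewrite eLs; apply: ler_sum => i _.
  case: ifP => [|_]; last exact: sqr_ge0.
  rewrite inE => hi.
  have hi' : s / 2 - delta <= a i := hi.
  nra.
Qed.
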